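(* For $n\ge1$ let $\mathcal{S}_{2n}=\{-n,\dots,-1,1,\dots,n\}$ and $\mathcal{S}_{2n+1}=\mathcal{S}_{2n}\cup\{0\}$. For $m\ge2$ let $T_m(z)=\sum_{\ell\ge0}t_{m,\ell}z^\ell$, where $t_{m,\ell}$ is the number of walks $0=y_0,y_1,\dots,y_\ell=-1$ with steps $y_i-y_{i-1}\in\mathcal{S}_m$ and $y_i\ge0$ for all $0\le i<\ell$ (walks absorbed at $-1$). Then the coefficients of $T_2(z)$ are the Catalan numbers ($[z^{2n+1}]T_2=\frac1{n+1}\binom{2n}{n}$, even coefficients zero), the coefficients of $T_3(z)$ are the Motzkin numbers ($[z^{n+1}]T_3$ is the $n$-th Motzkin number), and $T_4(z)=G_{0,1}(z)$, where $[z^\ell]G_{0,1}(z)$ is the number of walks $0=y_0,\dots,y_\ell=1$ with steps in $\{-2,-1,1,2\}$ and $y_i\ge1$ for all $1\le i\le\ell$.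
   Context: The $n$-th Motzkin number is the number of walks of length $n$ from $0$ to $0$ with steps in $\{-1,0,1\}$ never going below $0$. *)

(* Defs.v *)
From mathcomp Require Import all_boot all_order all_algebra.
Set Implicit Arguments. Unset Strict Implicit. Unset Printing Implicit Defensive.
Import GRing.Theory Num.Theory.
Local Open Scope ring_scope.

Fixpoint step_seqs (S : seq int) (l : nat) : seq (seq int) :=
  if l is l'.+1 then [seq s :: w | s <- S, w <- step_seqs S l'] else [:: [::]].

Definition positions (w : seq int) : seq int := 0 :: scanl +%R 0 w.

(* Number of walks 0 = y_0, ..., y_l = target with steps in S (a duplicate-free
   list) such that ok i y_i holds for every 0 <= i <= l. *)
Definition walks_count (S : seq int) (l : nat) (ok : nat -> int -> bool)
    (target : int) : nat :=
  count (fun w => (last 0 (positions w) == target)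
                  && all (fun i => ok i (nth 0 (positions w) i)) (iota 0 l.+1))
        (step_seqs S l).

Definition stepset (m : nat) : seq int :=
  [seq (k%:Z) | k <- iota 1 m./2] ++ [seq - (k%:Z) | k <- iota 1 m./2]
  ++ (if odd m then [:: 0] else [::]).

Definition t_coef (m l : nat) : nat :=
  walks_count (stepset m) l (fun i y => (i < l)%N ==> (0 <= y)) (-1).

Definition motzkin (n : nat) : nat :=
  walks_count [:: -1; 0; 1] n (fun _ y => 0 <= y) 0.

Definition G01_coef (l : nat) : nat :=
  walks_count [:: -2; -1; 1; 2] l (fun i y => (1 <= i)%N ==> (1 <= y)) 1.

(* Main.v *)
Require Import Defs.
From mathcomp Require Import all_boot all_order all_algebra.
From mathcomp Require Import zify ring lra.
Import GRing.Theory Num.Theory.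
Set Implicit Arguments. Unset Strict Implicit. Unset Printing Implicit Defensive.
Section Aux.
Local Open Scope ring_scope.

Lemma mem_step_seqs (S : seq int) l w :
  (w \in step_seqs S l) = (size w == l) && all (mem S) w.
Proof.
elim: l w => [|l IH] [|a w] //=.
- by apply/allpairsP; case=> [[x y] [/= _ _]].
- apply/allpairsP/idP.
    by case=> [[x y] [/= xS yT [-> ->]]]; move: yT; rewrite IH xS eqSS => /andP[-> ->].
  move=> /andP[sz /andP[aS wS]]; exists (a, w); split=> //=.
  by rewrite IH -eqSS sz.
Qed.

Lemma uniq_step_seqs (S : seq int) l : uniq S -> uniq (step_seqs S l).
Proof.
move=> uS; elim: l => [|l IH] //=.
apply: allpairs_uniq => //.
by move=> [x1 y1] [x2 y2] _ _ /= [-> ->].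
Qed.

Lemma count_step (S : seq int) l (Q : pred (seq int)) :
  count Q (step_seqs S l.+1) = (\sum_(s <- S) count (fun w => Q (s :: w)) (step_seqs S l))%N.
Proof.
rewrite /=; move: (step_seqs S l) => T; elim: S => [|s S IH]; first by rewrite big_nil.
by rewrite big_cons /= count_cat count_map IH.
Qed.

Lemma count_bij (T1 T2 : eqType) (s1 : seq T1) (s2 : seq T2) (P : pred T1) (Q : pred T2)
  (f : T1 -> T2) :
  uniq s1 -> uniq s2 -> injective f ->
  (forall x, x \in s1 -> P x -> (f x \in s2) && Q (f x)) ->
  (forall y, y \in s2 -> Q y -> exists2 x, (x \in s1) && P x & y = f x) ->
  count P s1 = count Q s2.
Proof.
move=> u1 u2 fi H1 H2.
rewrite -!size_filter -(size_map f).
apply: perm_size; apply: uniq_perm.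
- by rewrite (map_inj_uniq fi) filter_uniq.
- by rewrite filter_uniq.
move=> y; apply/mapP/idP.
  by case=> x; rewrite mem_filter => /andP[Px xs] ->; rewrite mem_filter andbC H1.
rewrite mem_filter => /andP[Qy ys]; have [x /andP[xs Px] ->] := H2 y ys Qy.
by exists x; rewrite // mem_filter Px.
Qed.

Fixpoint okw (P : nat -> int -> bool) (i : nat) (h : int) (w : seq int) : bool :=
  P i h && (if w is s :: w' then okw P i.+1 (h + s) w' else true).

Lemma foldl_sum (a : int) s : foldl +%R a s = a + \sum_(x <- s) x.
Proof.
elim: s a => [|x s IH] a /=; first by rewrite big_nil addr0.
by rewrite IH big_cons addrA.
Qed.

Lemma iotaS0 n : iota 0 n.+1 = 0%N :: map S (iota 0 n).
Proof. by rewrite /= -[1%N]/(1 + 0)%N iotaDl. Qed.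

Lemma okwE P i h w :
  okw P i h w = all (fun j => P (i + j)%N (h + \sum_(x <- take j w) x)) (iota 0 (size w).+1).
Proof.
elim: w i h => [|s w IH] i h; first by rewrite /= big_nil addr0 addn0 andbT.
rewrite [LHS]/= IH.
change (size (s::w)).+1 with (size w).+2.
move: (size w).+1 => n.
rewrite iotaS0 /= all_map big_nil addr0 addn0; congr (_ && _).
apply: eq_all => j /=.
by rewrite big_cons addrA addnS.
Qed.

Lemma posE w j : (j <= size w)%N -> nth 0 (positions w) j = \sum_(x <- take j w) x.
Proof.
case: j => [|j] hj; first by rewrite take0 big_nil.
by rewrite /positions /= nth_scanl // foldl_sum add0r.
Qed.

Lemma lastE w : last 0 (positions w) = \sum_(x <- w) x.
Proof.
have -> : last 0 (positions w) = nth 0 (positions w) (size w).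
  by rewrite /positions (last_nth 0) /= size_scanl.
by rewrite posE // take_size.
Qed.

Lemma walks_countE S l ok t :
  walks_count S l ok t =
  count (fun w => (\sum_(x <- w) x == t) && okw ok 0 0 w) (step_seqs S l).
Proof.
rewrite /walks_count; apply: eq_in_count => w; rewrite mem_step_seqs => /andP[/eqP sz _].
rewrite okwE sz lastE; congr (_ && _).
apply: eq_in_all => j; rewrite mem_iota /= add0n add0r => hj.
by rewrite posE // sz -ltnS.
Qed.

Lemma sum_rcons (w : seq int) a : \sum_(x <- rcons w a) x = \sum_(x <- w) x + a.
Proof. by rewrite -cats1 big_cat big_seq1. Qed.

Lemma okw_rcons P i h w a :
  okw P i h (rcons w a) = okw P i h w && P (i + size w).+1 (h + \sum_(x <- w) x + a).
Proof.
elim: w i h => [|s w IH] i h /=; first by rewrite big_nil addr0 addn0 !andbT.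
by rewrite IH andbA big_cons addrA addnS.
Qed.

Lemma okw_last P i h w : okw P i h w -> P (i + size w)%N (h + \sum_(x <- w) x).
Proof.
elim: w i h => [|s w IH] i h /=; first by rewrite big_nil addr0 addn0 andbT.
by case/andP=> _ /IH; rewrite big_cons addrA addnS.
Qed.

Lemma okw_ext P P' i h w :
  (forall j y, (i <= j <= i + size w)%N -> P j y = P' j y) -> okw P i h w = okw P' i h w.
Proof.
elim: w i h => [|s w IH] i h /= E.
  by rewrite E // addn0 leqnn.
rewrite E ?leqnn ?leq_addr //; congr (_ && _); apply: IH => j y /andP[h1 h2].
by apply: E; rewrite (ltnW h1) /= addnS.
Qed.

Lemma okw_shift (Q : pred int) i j h w :
  okw (fun _ y => Q y) i h w = okw (fun _ y => Q y) j h w.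
Proof. by elim: w i j h => [|s w IH] i j h //=; rewrite (IH _ j.+1). Qed.

Lemma int_absorb (s a : int) : 0 <= s -> -1 <= a -> s + a = -1 -> a = -1 /\ s = 0.
Proof. move=> h1 h2 h3; lia. Qed.

Lemma absorb (S S' : seq int) n : uniq S -> uniq S' -> S =i S' -> -1 \in S ->
  (forall a, a \in S -> -1 <= a) ->
  count (fun w => (\sum_(x <- w) x == -1) && okw (fun i y => (i < n.+1)%N ==> (0 <= y)) 0 0 w)
    (step_seqs S n.+1)
  = count (fun w => (\sum_(x <- w) x == 0) && okw (fun _ y => 0 <= y) 0 0 w) (step_seqs S' n).
Proof.
move=> uS uS' eS m1 ge.
have oe : forall x : seq int, size x = n ->
   okw (fun i y => (i < n.+1)%N ==> (0 <= y)) 0 0 x = okw (fun _ y => 0 <= y) 0 0 x.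
  move=> x sx; apply: okw_ext => j y; rewrite add0n sx => /andP[_ hj].
  by rewrite ltnS hj.
symmetry; apply: (@count_bij _ _ _ _ _ _ (fun w => rcons w (-1))).
- exact: uniq_step_seqs.
- exact: uniq_step_seqs.
- exact: rcons_injl.
- move=> x; rewrite mem_step_seqs => /andP[/eqP sx ax] /andP[/eqP s0 ok].
  rewrite mem_step_seqs size_rcons sx eqxx all_rcons /=.
  rewrite sum_rcons s0 add0r eqxx okw_rcons oe // ok /= add0n sx ltnn /= !andbT.
  apply/andP; split; first exact: m1.
  by apply/allP => a /(allP ax) ha; exact: (etrans (eS a) ha).
move=> y; rewrite mem_step_seqs => /andP[/eqP sy ay] /andP[/eqP s1 ok].
case/lastP: y sy ay s1 ok => [|x a] //.
rewrite size_rcons all_rcons sum_rcons okw_rcons => -[sx] /andP[aS ax] sxa /andP[okx _].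
rewrite oe // in okx.
have := okw_last okx; rewrite add0r => s0.
have := ge a aS => ha.
have [ea e0] := int_absorb s0 ha sxa.
exists x; last by rewrite ea.
rewrite mem_step_seqs sx eqxx e0 eqxx okx /=.
rewrite andbT; apply/allP => b /(allP ax) hb; exact: (etrans (esym (eS b)) hb).
Qed.

Definition Dc k (h : int) : nat :=
  count (fun w => (h + \sum_(x <- w) x == 0) && okw (fun _ y => 0 <= y) 0 h w)
    (step_seqs [:: 1; -1] k).

Definition cat2 k u : int := ('C(k, u))%:Z - (if u is u'.+1 then ('C(k, u'))%:Z else 0).

Lemma sum_ge (w : seq int) : all (mem [:: 1; -1]) w -> - (size w)%:Z <= \sum_(x <- w) x.
Proof.
elim: w => [|s w IH] /=; first by rewrite big_nil.
rewrite big_cons => /andP[hs /IH h]; move: hs; rewrite !inE => /orP[]/eqP ->; move: h; move: (\sum_(x <- w) x) (size w) => a n; rewrite -addn1 PoszD; lia.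
Qed.

Lemma int_aux1 (k : nat) (h s : int) : k%:Z < h -> - k%:Z <= s -> (h + s == 0) = false.
Proof. move=> h1 h2; apply/eqP; lia. Qed.

Lemma Dc_big k h : k%:Z < h -> Dc k h = 0%N.
Proof.
move=> hk; rewrite /Dc (@eq_in_count _ _ pred0) ?count_pred0 // => w.
rewrite mem_step_seqs => /andP[/eqP sz aw].
have := sum_ge aw; rewrite sz => hs.
by rewrite (int_aux1 hk hs).
Qed.

Lemma Dc_step k h : Dc k.+1 h = if 0 <= h then (Dc k (h + 1) + Dc k (h - 1))%N else 0%N.
Proof.
rewrite /Dc count_step !big_cons big_nil addn0 /=.
case: ifP => h0.
  by congr addn; apply: eq_count => w /=; rewrite big_cons addrA (okw_shift _ 1 0).
by rewrite !(@eq_count _ _ pred0) ?count_pred0 // => w /=; rewrite andbF.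
Qed.

Lemma cat2_rec k v : cat2 k v + cat2 k v.+1 = cat2 k.+1 v.+1.
Proof.
rewrite /cat2; case: v => [|v]; rewrite !binS ?bin0 !PoszD; lia.
Qed.

Lemma cat2_0 k : cat2 k.+1 0 = cat2 k 0.
Proof. by rewrite /cat2 !bin0. Qed.

Lemma cat2_diag d : cat2 (d + d).+1 d.+1 = 0.
Proof.
rewrite /cat2 -{1}(bin_sub (n := (d + d).+1) (m := d)); last lia.
have -> : ((d + d).+1 - d = d.+1)%N by lia.
by rewrite subrr.
Qed.

Lemma Dc_formula k u d : (u + d = k)%N -> (u <= d.+1)%N -> (Dc k (d%:Z - u%:Z))%:Z = cat2 k u.
Proof.
elim: k u d => [|k IH] u d.
  by case: u => // ; case: d => // _ _; rewrite /Dc /= big_nil.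
move=> e le; rewrite Dc_step; case: ifP => h0; last first.
  have eu : u = d.+1 by lia.
  have -> : k = (d + d)%N by lia.
  by rewrite eu cat2_diag.
case: d e le h0 => [|d'] e le h0.
  lia.
rewrite PoszD.
case: u e le h0 => [|v] e le h0.
  rewrite Dc_big; last lia.
  have -> : (d'.+1%:Z - 0%:Z - 1) = d'%:Z - 0%:Z by lia.
  rewrite IH; [|lia|lia].
  have -> : k = d' by lia.
  by rewrite cat2_0.
have -> : (d'.+1%:Z - v.+1%:Z + 1) = d'.+1%:Z - v%:Z by lia.
have -> : (d'.+1%:Z - v.+1%:Z - 1) = d'%:Z - v.+1%:Z by lia.
rewrite IH; [|lia|lia].
rewrite IH; [|lia|lia].
by rewrite cat2_rec.
Qed.

Lemma stepset2 : stepset 2 = [:: 1; -1]. Proof. reflexivity. Qed.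
Lemma stepset3 : stepset 3 = [:: 1; -1; 0]. Proof. reflexivity. Qed.
Lemma stepset4 : stepset 4 = [:: 1; 2; -1; -2]. Proof. reflexivity. Qed.

Lemma sum_par (w : seq int) : all (mem [:: 1; -1]) w ->
  exists c : int, \sum_(x <- w) x = (size w)%:Z - 2 * c.
Proof.
elim: w => [|s w IH] /=; first by exists 0; rewrite big_nil.
rewrite big_cons => /andP[hs /IH [c hc]]; move: hs; rewrite !inE => /orP[]/eqP ->.
  by exists c; rewrite hc; move: (size w) => m; lia.
by exists (c + 1); rewrite hc; move: (size w) => m; lia.
Qed.

Lemma int_aux2 (n : nat) (c : int) : ((2 * n)%N%:Z - 2 * c == -1) = false.
Proof. apply/eqP; rewrite PoszM; lia. Qed.

Lemma t2_even n : t_coef 2 (2 * n) = 0%N.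
Proof.
rewrite /t_coef walks_countE stepset2 (@eq_in_count _ _ pred0) ?count_pred0 // => w.
rewrite mem_step_seqs => /andP[/eqP sz aw].
have [c hc] := sum_par aw.
by rewrite hc sz int_aux2.
Qed.

Lemma t2_odd n : ((t_coef 2 (2 * n).+1)%:R = ('C(2 * n, n))%:R / (n.+1)%:R :> rat).
Proof.
have E : t_coef 2 (2 * n).+1 = Dc (2 * n) (n%:Z - n%:Z).
  rewrite /t_coef walks_countE stepset2 (@absorb _ [:: 1; -1]) //.
  - by rewrite subrr /Dc; apply: eq_count => w; rewrite add0r.
  - by move=> a; rewrite !inE => /orP[]/eqP ->.
have F := Dc_formula (u := n) (d := n) (k := 2 * n) ltac:(lia) ltac:(lia).
rewrite -E in F.
have H : (t_coef 2 (2 * n).+1 * n.+1 = 'C(2 * n, n))%N.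
  case: n E F => [|m] E F.
    by move: F; rewrite /cat2 /= bin0 subr0 muln1 => /eqP; rewrite eqz_nat => /eqP.
  have M := mul_bin_left (2 * m.+1) m.
  move: F M; rewrite /cat2.
  move: (t_coef 2 _) ('C(2 * m.+1, m.+1)) ('C(2 * m.+1, m)) => a b c.
  have -> : (2 * m.+1 - m = m.+2)%N by lia.
  move=> F M; nia.
rewrite -H natrM mulfK //.
by rewrite pnatr_eq0.
Qed.

Lemma t3 n : t_coef 3 n.+1 = motzkin n.
Proof.
rewrite /t_coef /motzkin !walks_countE stepset3 (@absorb _ [:: -1; 0; 1]) //.
- by move=> x; rewrite !inE; case: (x == 1); case: (x == -1); case: (x == 0).
- by move=> a; rewrite !inE => /orP[/eqP ->|/orP[]/eqP ->].
Qed.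

Lemma walks_countE2 S l ok t :
  walks_count S l ok t =
  count (fun w => (\sum_(x <- w) x == t) &&
     all (fun j => ok j (\sum_(x <- take j w) x)) (iota 0 l.+1)) (step_seqs S l).
Proof.
rewrite walks_countE; apply: eq_in_count => w; rewrite mem_step_seqs => /andP[/eqP sz _].
rewrite okwE sz; congr (_ && _); apply: eq_all => j; by rewrite add0n add0r.
Qed.

Definition fl (w : seq int) := rev (map -%R w).

Lemma flK : involutive fl.
Proof. by move=> w; rewrite /fl map_rev revK -map_comp map_id_in // => x _ /=; rewrite opprK. Qed.

Lemma sum_fl_take w i : (i <= size w)%N ->
  \sum_(x <- take i (fl w)) x = \sum_(x <- take (size w - i) w) x - \sum_(x <- w) x.
Proof.
move=> hi; rewrite /fl take_rev size_map -map_drop big_rev big_map sumrN.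
have -> : \sum_(x <- w) x = \sum_(x <- take (size w - i) w) x + \sum_(x <- drop (size w - i) w) x by rewrite -big_cat cat_take_drop.
by rewrite opprD addrA subrr add0r.
Qed.

Lemma sum_fl w : \sum_(x <- fl w) x = - \sum_(x <- w) x.
Proof. by rewrite /fl big_rev big_map sumrN. Qed.

Lemma t4 l : t_coef 4 l = G01_coef l.
Proof.
rewrite /t_coef /G01_coef !walks_countE2 stepset4.
symmetry; apply: (@count_bij _ _ _ _ _ _ fl).
- exact: uniq_step_seqs.
- exact: uniq_step_seqs.
- exact: (can_inj flK).
- move=> x; rewrite mem_step_seqs => /andP[/eqP sx ax] /andP[/eqP s1 hx].
  apply/and3P; split.
  + rewrite mem_step_seqs /fl size_rev size_map sx eqxx /= all_rev all_map.
    by apply/allP => a /(allP ax); rewrite !inE => /or4P[]/eqP ->.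
  + by rewrite sum_fl s1.
  + apply/allP => j; rewrite mem_iota add0n ltnS => hj; apply/implyP => jl.
    rewrite sum_fl_take ?sx // s1.
    have := allP hx (l - j)%N; rewrite mem_iota add0n ltnS leq_subr => /(_ isT).
    rewrite subn_gt0 jl /= => h; by rewrite subr_ge0.
move=> y; rewrite mem_step_seqs => /andP[/eqP sy ay] /andP[/eqP s1 hy].
exists (fl y); last by rewrite flK.
apply/and3P; split.
+ rewrite mem_step_seqs /fl size_rev size_map sy eqxx /= all_rev all_map.
  by apply/allP => a /(allP ay); rewrite !inE => /or4P[]/eqP ->.
+ by rewrite sum_fl s1 opprK.
+ apply/allP => j; rewrite mem_iota add0n ltnS => hj; apply/implyP => jl.
  rewrite sum_fl_take ?sy // s1 opprK.
  have := allP hy (l - j)%N; rewrite mem_iota add0n ltnS leq_subr => /(_ isT).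
  have -> : (l - j < l)%N by lia.
  by move: (\sum_(x <- take (l - j) y) x) => s /= h; lia.
Qed.
End Aux.

Theorem proposition5p1 :
  (forall n : nat,
      ((t_coef 2 (2 * n).+1)%:R = ('C(2 * n, n))%:R / (n.+1)%:R :> rat)%R
      /\ t_coef 2 (2 * n) = 0%N)
  /\ (forall n : nat, t_coef 3 n.+1 = motzkin n)
  /\ (forall l : nat, t_coef 4 l = G01_coef l).
Proof.
split; first by move=> n; split; [exact: t2_odd | exact: t2_even].
split; [exact: t3 | exact: t4].
Qed.
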